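(* Let $q$ be a prime power, $s\geq 2$, $V=\mathbb{F}_{q^s}^3$, and let $W$ be an $(s+1)$-dimensional $\mathbb{F}_q$-subspace of $V$ such that $\mathcal{L}_W$ is a nontrivial blocking set of $\mathrm{PG}(2,q^s)$ (i.e. $\mathcal{L}_W$ is not a line) and $\mathcal{L}_W$ has a point of weight $s-1$. Then $\mathcal{L}_W$ is projectively equivalent to $\mathcal{L}_U$, where $U=\{(x,\mathrm{Tr}_{q^s/q}(x),y): x\in\mathbb{F}_{q^s},\ y\in\mathbb{F}_q\}$.
   Context: Points of $\mathrm{PG}(2,q^s)$ are the 1-dimensional $\mathbb{F}_{q^s}$-subspaces $\langle \vec v\rangle_{\mathbb{F}_{q^s}}$ of $V=\mathbb{F}_{q^s}^3$, and lines are the 2-dimensional $\mathbb{F}_{q^s}$-subspaces. For an $\mathbb{F}_q$-subspace $U$ of $V$, $\mathcal{L}_U=\{\langle \vec v\rangle_{\mathbb{F}_{q^s}} : \vec v\in U\setminus\{0\}\}$. The weight of a point $P=\langle\vec v\rangle_{\mathbb{F}_{q^s}}$ with respect to $\mathcal{L}_U$ is $\dim_{\mathbb{F}_q}(U\cap \langle\vec v\rangle_{\mathbb{F}_{q^s}})$. $\mathrm{Tr}_{q^s/q}(x)=x+x^q+\dots+x^{q^{s-1}}$. A blocking set is a point set meeting every line. *)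

(* Defs.v *)
From HB Require Import structures.
From mathcomp Require Import all_boot all_order all_algebra all_field.
Set Implicit Arguments. Unset Strict Implicit. Unset Printing Implicit Defensive.
Import GRing.Theory.
Local Open Scope ring_scope.

(* Setting: K is a finite field of order q^s; vectors of V = K^3 are row
   vectors 'rV[K]_3; a projective point <v> is represented by a nonzero v. *)

Section Defs.
Variable K : finFieldType.

Definition prime_power (q : nat) : Prop :=
  exists p k : nat, prime p /\ (0 < k)%N /\ q = (p ^ k)%N.

Definition Fq (q : nat) : {set K} := [set x : K | x ^+ q == x].

Definition Fq_subspace (q : nat) (W : {set 'rV[K]_3}) : Prop :=
  [/\ 0 \in W,
      forall u v, u \in W -> v \in W -> u + v \in W &
      forall a u, a \in Fq q -> u \in W -> a *: u \in W].

Definition Fq_dim (q : nat) (W : {set 'rV[K]_3}) : nat := trunc_log q #|W|.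

Definition Kspan (v : 'rV[K]_3) : {set 'rV[K]_3} := [set w | (w <= v)%MS].

Definition inL (U : {set 'rV[K]_3}) (v : 'rV[K]_3) : Prop :=
  exists2 u, u \in U & u != 0 /\ (u == v)%MS.

Definition weight (q : nat) (U : {set 'rV[K]_3}) (v : 'rV[K]_3) : nat :=
  Fq_dim q (U :&: Kspan v).

(* lines of PG(2,K): 2-dimensional K-subspaces, given as row spaces of
   rank-2 matrices M; the point <v> lies on M iff (v <= M)%MS *)
Definition is_line (M : 'M[K]_(2,3)) : Prop := \rank M = 2%N.

Definition blocking_set (P : 'rV[K]_3 -> Prop) : Prop :=
  forall M : 'M[K]_(2,3), is_line M ->
    exists v : 'rV[K]_3, [/\ v != 0, P v & (v <= M)%MS].

Definition is_line_set (P : 'rV[K]_3 -> Prop) : Prop :=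
  exists2 M : 'M[K]_(2,3), is_line M &
    forall v : 'rV[K]_3, v != 0 -> (P v <-> (v <= M)%MS).

Definition Tr (q s : nat) (x : K) : K := \sum_(i < s) x ^+ (q ^ i).

Definition row3 (a b c : K) : 'rV[K]_3 := \row_(j < 3) [:: a; b; c]`_j.

Definition U_Tr (q s : nat) : {set 'rV[K]_3} :=
  [set v | [exists x : K, exists y : K, (y \in Fq q) && (v == row3 x (Tr q s x) y)]].

Definition proj_equiv (P Q : 'rV[K]_3 -> Prop) : Prop :=
  exists2 A : 'M[K]_3, A \in unitmx &
    forall v : 'rV[K]_3, v != 0 -> (P v <-> Q (v *m A)).

End Defs.

(* Main.v *)
Require Import Defs.
From HB Require Import structures.
From mathcomp Require Import all_boot all_order all_algebra all_field.
From mathcomp Require Import zify ring.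
Set Implicit Arguments. Unset Strict Implicit. Unset Printing Implicit Defensive.
Import GRing.Theory.
Local Open Scope ring_scope.

Section FqFacts.
Variables (K : finFieldType) (q s : nat).
Hypotheses (hq : prime_power q) (hK : #|K| = (q ^ s)%N) (hs : (2 <= s)%N).

Local Notation F := (Fq K q).

Lemma q_gt1 : (1 < q)%N.
Proof.
case: hq => p [k [pp [k0 ->]]].
apply: (leq_trans (prime_gt1 pp)).
by rewrite -{1}(expn1 p) leq_exp2l ?prime_gt1.
Qed.

Lemma frobD (x y : K) : (x + y) ^+ q = x ^+ q + y ^+ q.
Proof.
case: hq => p [k [pp [k0 qE]]].
have pc : p \in [pchar K].
  apply: (@card_finPcharP _ p (k * s)) => //.
  by rewrite hK qE expnM.
rewrite qE; apply: exprDn_pchar.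
by rewrite pnatX (pnatE _ pp) pc.
Qed.

Lemma frobN (x : K) : (- x) ^+ q = - x ^+ q.
Proof.
apply/eqP; rewrite -subr_eq0 opprK addrC -frobD subrr expr0n.
by case: q q_gt1.
Qed.

Lemma frobB (x y : K) : (x - y) ^+ q = x ^+ q - y ^+ q.
Proof. by rewrite frobD frobN. Qed.

Lemma Fq_E x : (x \in F) = (x ^+ q == x).
Proof. by rewrite inE. Qed.

Lemma Fq0 : 0 \in F.
Proof. by rewrite Fq_E expr0n; case: q q_gt1. Qed.

Lemma Fq1 : 1 \in F.
Proof. by rewrite Fq_E expr1n. Qed.

Lemma FqD a b : a \in F -> b \in F -> a + b \in F.
Proof. by rewrite !Fq_E frobD => /eqP-> /eqP->. Qed.

Lemma FqN a : a \in F -> - a \in F.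
Proof. by rewrite !Fq_E frobN => /eqP->. Qed.

Lemma FqB a b : a \in F -> b \in F -> a - b \in F.
Proof. by move=> ha hb; rewrite FqD ?FqN. Qed.

Lemma FqM a b : a \in F -> b \in F -> a * b \in F.
Proof. by rewrite !Fq_E exprMn => /eqP-> /eqP->. Qed.

Lemma FqV a : a \in F -> a^-1 \in F.
Proof. by rewrite !Fq_E exprVn => /eqP->. Qed.

Lemma Fq_expq a : a \in F -> a ^+ q = a.
Proof. by rewrite Fq_E => /eqP. Qed.


Lemma card_roots_lt (P : {poly K}) : P != 0 -> (#|[set x | root P x]| < size P)%N.
Proof.
move=> P0; rewrite cardE; apply: max_poly_roots => //; last exact: enum_uniq.
by apply/allP => x; rewrite mem_enum inE.
Qed.

Lemma frobqD i (x y : K) : (x + y) ^+ (q ^ i) = x ^+ (q ^ i) + y ^+ (q ^ i).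
Proof.
elim: i => [|i IH]; first by rewrite !expn0 !expr1.
by rewrite expnSr !exprM IH frobD.
Qed.

Lemma Fq_expqi a i : a \in F -> a ^+ (q ^ i) = a.
Proof.
move=> ha; elim: i => [|i IH]; first by rewrite expn0 expr1.
by rewrite expnSr exprM IH Fq_expq.
Qed.

Local Notation Tr := (@Tr K q s).

Lemma TrD x y : Tr (x + y) = Tr x + Tr y.
Proof. by rewrite /Tr -big_split /=; apply: eq_bigr => i _; rewrite frobqD. Qed.

Lemma Tr0 : Tr 0 = 0.
Proof. by have := TrD 0 0; rewrite addr0 => h; apply: (addrI (Tr 0)); rewrite addr0 -h. Qed.

Lemma TrN x : Tr (- x) = - Tr x.
Proof. by apply/eqP; rewrite -subr_eq0 opprK addrC -TrD subrr Tr0. Qed.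

Lemma TrB x y : Tr (x - y) = Tr x - Tr y.
Proof. by rewrite TrD TrN. Qed.

Lemma TrZ a x : a \in F -> Tr (a * x) = a * Tr x.
Proof.
move=> ha; rewrite /Tr mulr_sumr; apply: eq_bigr => i _.
by rewrite exprMn Fq_expqi.
Qed.

Lemma frob_sum (I : Type) (r : seq I) (f : I -> K) :
  (\sum_(i <- r) f i) ^+ q = \sum_(i <- r) f i ^+ q.
Proof.
apply: (big_ind2 (fun a b => a ^+ q = b)) => //.
  by rewrite expr0n; case: q q_gt1.
by move=> a1 a2 b1 b2 <- <-; rewrite frobD.
Qed.

Lemma Tr_Fq x : Tr x \in F.
Proof.
rewrite Fq_E /Tr frob_sum.
have -> : \sum_(i < s) (x ^+ (q ^ i)) ^+ q = \sum_(i < s) x ^+ (q ^ i.+1).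
  by apply: eq_bigr => i _; rewrite -exprM expnSr.
have e1 := @big_ord_recl K 0 +%R s (fun i : 'I_s.+1 => x ^+ (q ^ i)).
have e2 := @big_ord_recr K 0 +%R s (fun i : 'I_s.+1 => x ^+ (q ^ i)).
rewrite e2 /= expn0 expr1 -hK expf_card addrC in e1.
by apply/eqP; apply: (addIr x); rewrite [RHS]addrC e1 addrC.
Qed.

Definition TrP (c : K) : {poly K} := \sum_(i < s) 'X^(q ^ i) - c%:P.

Lemma TrP_horner c x : (TrP c).[x] = Tr x - c.
Proof.
by rewrite /TrP hornerD hornerN hornerC horner_sum; congr (_ - _);
  apply: eq_bigr => i _; rewrite hornerXn.
Qed.

Lemma s_eq : s = (s.-1).+1.
Proof. by case: s hs. Qed.

Lemma TrP_size c : (size (TrP c) <= (q ^ s.-1).+1)%N.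
Proof.
rewrite /TrP; apply: (leq_trans (size_polyD _ _)); rewrite geq_max; apply/andP; split.
  apply: (big_ind (fun p : {poly K} => size p <= (q ^ s.-1).+1)%N) => //.
  - by rewrite size_poly0.
  - by move=> p1 p2 h1 h2; apply: (leq_trans (size_polyD _ _)); rewrite geq_max h1 h2.
  - move=> i _; rewrite size_polyXn ltnS leq_exp2l ?q_gt1 //.
    by rewrite -ltnS -s_eq.
by rewrite size_polyN (leq_trans (size_polyC_leq1 _)).
Qed.

Lemma TrP_neq0 c : TrP c != 0.
Proof.
apply/eqP => /(congr1 (fun p : {poly K} => p`_(q ^ s.-1))).
rewrite coef0 /TrP coefB coefC coef_sum.
have -> : (q ^ s.-1 == 0)%N = false by rewrite expn_eq0; case: q q_gt1.
have lt : (s.-1 < s)%N by rewrite {2}s_eq.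
rewrite subr0 (bigD1 (Ordinal lt)) //= coefXn eqxx big1 ?addr0.
  by move/eqP; rewrite oner_eq0.
move=> i ne; rewrite coefXn eqn_exp2l ?q_gt1 //.
by rewrite -(inj_eq val_inj) /= in ne; rewrite eq_sym (negbTE ne).

Qed.

Lemma card_Tr_fiber c : (#|[set x | Tr x == c]| <= q ^ s.-1)%N.
Proof.
rewrite -ltnS; apply: leq_trans (TrP_size c).
have -> : [set x | Tr x == c] = [set x | root (TrP c) x].
  by apply/setP => x; rewrite !inE /root TrP_horner subr_eq0.
exact: card_roots_lt (TrP_neq0 c).
Qed.

Lemma card_Fq_le : (#|F| <= q)%N.
Proof.
have P0 : ('X^q - 'X : {poly K}) != 0.
  by rewrite -size_poly_eq0 size_polyDl ?size_polyXn // size_polyN size_polyX ltnS q_gt1.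
rewrite -ltnS; have := card_roots_lt P0.
rewrite size_polyDl ?size_polyXn // ?size_polyN ?size_polyX ?ltnS ?q_gt1 //.
have -> // : F = [set x | root ('X^q - 'X) x].
by apply/setP => x; rewrite !inE /root !hornerE subr_eq0.
Qed.

Lemma card_Fq : #|F| = q.
Proof.
apply/eqP; rewrite eqn_leq card_Fq_le /=.
have sub : Tr @: [set: K] \subset F.
  by apply/subsetP => y /imsetP [x _ ->]; apply: Tr_Fq.
apply: leq_trans (subset_leq_card sub).
have eK : #|K| = \sum_(c in Tr @: [set: K]) #|[set x | Tr x == c]|.
  rewrite -cardsT -sum1_card (partition_big_imset Tr) /=.
  apply: eq_bigr => c _; rewrite -sum1dep_card; apply: eq_bigl => x.
  by rewrite inE.
have : (#|K| <= #|Tr @: [set: K]| * q ^ s.-1)%N.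
  rewrite eK -sum_nat_const; apply: leq_sum => c _; exact: card_Tr_fiber.
rewrite hK; have -> : (q ^ s = q * q ^ s.-1)%N by rewrite -expnS -s_eq.
by rewrite leq_pmul2r // expn_gt0; case: q q_gt1.
Qed.


Local Notation V := 'rV[K]_3.

Definition spanq (l : seq V) : {set V} :=
  foldr (fun x S => [set p.1 *: x + p.2 | p in setX F S]) [set 0] l.

Lemma spanq_nil : spanq [::] = [set 0].
Proof. by []. Qed.

Lemma spanq_consP x l u :
  reflect (exists a y, [/\ a \in F, y \in spanq l & u = a *: x + y])
          (u \in spanq (x :: l)).
Proof.
apply: (iffP imsetP) => [[[a y]] /setXP [ha hy] -> | [a [y [ha hy ->]]]].
  by exists a, y.
by exists (a, y) => //; apply/setXP.
Qed.

Lemma spanq_ind (P : V -> Prop) l :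
  P 0 -> (forall u v, P u -> P v -> P (u + v)) ->
  (forall a u, a \in F -> P u -> P (a *: u)) ->
  (forall x, x \in l -> P x) -> forall u, u \in spanq l -> P u.
Proof.
move=> P0 PD PZ; elim: l => [|x l IH] Pl u.
  by rewrite spanq_nil inE => /eqP ->.
case/spanq_consP => a [y [ha hy ->]]; apply: PD.
  by apply: PZ => //; apply: Pl; rewrite mem_head.
by apply: IH => // z zl; apply: Pl; rewrite in_cons zl orbT.
Qed.

Lemma spanq_subspace l : Fq_subspace q (spanq l).
Proof.
elim: l => [|x l [IH0 IHD IHZ]].
  split; first by rewrite spanq_nil inE.
  - by move=> u v; rewrite spanq_nil !inE => /eqP-> /eqP->; rewrite addr0.
  - by move=> a u; rewrite spanq_nil !inE => _ /eqP->; rewrite scaler0.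
split.
- by apply/spanq_consP; exists 0, 0; rewrite Fq0 IH0 scale0r addr0.
- move=> u v /spanq_consP [a [y [ha hy ->]]] /spanq_consP [b [z [hb hz ->]]].
  apply/spanq_consP; exists (a + b), (y + z); split; rewrite ?FqD ?IHD //.
  by rewrite scalerDl addrACA.
- move=> b u hb /spanq_consP [a [y [ha hy ->]]].
  apply/spanq_consP; exists (b * a), (b *: y); split; rewrite ?FqM ?IHZ //.
  by rewrite scalerDr scalerA.
Qed.

Lemma spanq_sub X l : Fq_subspace q X -> {subset l <= X} -> spanq l \subset X.
Proof.
case=> X0 XD XZ lX; apply/subsetP; apply: spanq_ind => //.
Qed.

Lemma spanq0 l : 0 \in spanq l.
Proof. by case: (spanq_subspace l). Qed.

Lemma card_spanq_cons x l : x \notin spanq l ->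
  #|spanq (x :: l)| = (q * #|spanq l|)%N.
Proof.
move=> xn; rewrite /= card_in_imset ?cardsX ?card_Fq //.
move=> [a y] [b z] /setXP [ha hy] /setXP [hb hz] /= e.
case: (eqVneq a b) => [ab|ab].
  by rewrite ab in e; move/addrI: e => ->; rewrite ab.
exfalso; move/negP: xn; apply.
have [S0 SD SZ] := spanq_subspace l.
have -> : x = (a - b)^-1 *: (z - y).
  apply: (@scalerI _ _ (a - b)); first by rewrite subr_eq0.
  rewrite scalerA mulfV ?subr_eq0 // scale1r scalerBl.
  apply/eqP; rewrite subr_eq -(addrK y (a *: x)) e [b *: x + z]addrC.
  by rewrite addrAC.
apply: (SZ ((a - b)^-1) (z - y)); first by rewrite FqV ?FqB.
by apply: SD => //; rewrite -scaleN1r SZ // FqN ?Fq1.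
Qed.

Lemma extend_aux X : Fq_subspace q X -> forall n l0, (#|X| - #|spanq l0| < n)%N ->
  {subset l0 <= X} ->
  exists l, [/\ {subset l <= X}, spanq (l ++ l0) = X &
                #|X| = (q ^ size l * #|spanq l0|)%N].
Proof.
move=> hX; elim=> [//|n IH] l0 hn hl0.
have subX := spanq_sub hX hl0.
case: (boolP (X \subset spanq l0)) => [sub|nsub].
  exists [::]; split => //.
    by apply/eqP; rewrite eqEsubset sub subX.
  by rewrite expn0 mul1n; apply/eqP; rewrite eqn_leq subset_leq_card // subset_leq_card.
have [x xX xn] := subsetPn nsub.
have hl0' : {subset x :: l0 <= X}.
  by move=> y; rewrite in_cons => /orP [/eqP ->|/hl0].
have c1 := card_spanq_cons xn.
have c2 := subset_leq_card (spanq_sub hX hl0').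
have c3 : (0 < #|spanq l0|)%N by apply/card_gt0P; exists 0; apply: spanq0.
have c4 : (#|spanq l0| < q * #|spanq l0|)%N by rewrite ltn_Pmull ?q_gt1.
have [l [lX e1 e2]] : exists l, [/\ {subset l <= X}, spanq (l ++ x :: l0) = X &
                #|X| = (q ^ size l * #|spanq (x :: l0)|)%N].
  apply: IH hl0'; rewrite c1; lia.
exists (rcons l x); split.
- by move=> y; rewrite mem_rcons in_cons => /orP [/eqP ->|/lX].
- by rewrite cat_rcons.
- by rewrite e2 c1 size_rcons expnSr mulnA.
Qed.

Lemma spanq_basis X : Fq_subspace q X ->
  exists l, [/\ {subset l <= X}, spanq l = X & #|X| = (q ^ size l)%N].
Proof.
move=> hX; have [l [lX e1 e2]] := extend_aux hX (ltnSn _) (l0 := [::]) (fun x (h : x \in [::]) => match notF h with end).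
by exists l; rewrite cats0 in e1; rewrite e2 spanq_nil cards1 muln1.
Qed.

Lemma Fq_dim_size (X : {set V}) (l : seq V) : #|X| = (q ^ size l)%N -> Fq_dim q X = size l.
Proof. by move=> e; rewrite /Fq_dim e trunc_expnK ?q_gt1. Qed.

End FqFacts.

Section Geom.
Variable K : finFieldType.
Local Notation V := 'rV[K]_3.

Lemma transport (W U : {set V}) (A : 'M[K]_3) : A \in unitmx ->
  (forall w, w \in W -> w *m A \in U) ->
  (forall u, u \in U -> exists2 w, w \in W & u = w *m A) ->
  proj_equiv (inL W) (inL U).
Proof.
move=> uA WU UW; exists A => // x x0; split.
  case=> u uW [u0 /andP [ux xu]]; exists (u *m A); first exact: WU.
  split; last by rewrite !submxMr.
  apply: contra u0 => /eqP h; apply/eqP.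
  by rewrite -(mulmxK uA u) h mul0mx.
case=> u' /UW [w wW ->] [w0 /andP [wx xw]]; exists w => //; split.
  by apply: contra w0 => /eqP ->; rewrite mul0mx.
apply/andP; split.
  by rewrite -(mulmxK uA w) -(mulmxK uA x) submxMr.
by rewrite -(mulmxK uA w) -(mulmxK uA x) submxMr.
Qed.

Lemma mx11_mul n (m : 'M[K]_1) (x : 'M[K]_(1, n)) : m *m x = m 0 0 *: x.
Proof. by rewrite {1}(mx11_scalar m) mul_scalar_mx. Qed.

Lemma mx11_eq0 (m : 'M[K]_1) : (m == 0) = (m 0 0 == 0).
Proof.
apply/eqP/eqP => [->|h]; first by rewrite mxE.
by rewrite (mx11_scalar m) h raddf0.
Qed.

Lemma rank_base n m (A : 'M[K]_(n, m)) r : \rank A = r ->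
  exists M : 'M[K]_(r, m), (M :=: A)%MS.
Proof. by move=> <-; exists (row_base A); exact: eq_row_base. Qed.

Lemma kill (c : 'cV[K]_3) (a b : 'M[K]_1) (x z : V) :
  x *m c = 0 -> z *m c != 0 -> (a *m x + b *m z) *m c = 0 -> b = 0.
Proof.
move=> xc zc; rewrite mulmxDl -!mulmxA xc mulmx0 add0r mx11_mul => /eqP.
rewrite scaler_eq0 (negbTE zc) orbF => /eqP h.
by apply/eqP; rewrite mx11_eq0 h.
Qed.

Lemma degenerate (W : {set V}) (c : 'cV[K]_3) : c != 0 ->
  (forall w, w \in W -> w *m c = 0) -> blocking_set (inL W) -> is_line_set (inL W).
Proof.
move=> c0 Wc hbl.
have [i ci] : exists i, c i 0 != 0.
  case: (pickP (fun i => c i 0 != 0)) => [i ci|none]; first by exists i.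
  case/eqP: c0; apply/matrixP => i j; rewrite (ord1 j) mxE.
  by move/negbFE: (none i) => /eqP.
set z : V := delta_mx 0 i.
have zc : z *m c != 0.
  by rewrite -rowE mx11_eq0 mxE.
have rc : \rank c = 1%N.
  apply/eqP; rewrite eqn_leq rank_leq_col lt0n mxrank_eq0 c0 //.
have [M eM] : exists M : 'M[K]_(2, 3), (M :=: kermx c)%MS.
  by apply: rank_base; rewrite mxrank_ker rc.
have LW x : inL W x -> x *m c = 0.
  case=> u uW [u0 /andP [ux xu]].
  by case/submxP: xu => D ->; rewrite -mulmxA Wc // mulmx0.
exists M; first by have /eqmxP e := eM; rewrite /is_line (eqmx_rank e) mxrank_ker rc.
move=> x x0; split.
  by move/LW => h; rewrite eM sub_kermx h.
rewrite eM sub_kermx => /eqP xc.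
have rf : \rank (col_mx x z) = 2%N.
  apply/eqP; apply: (@inj_row_free _ (1 + 1) 3 (col_mx x z)) => y.
  rewrite -[y]hsubmxK mul_row_col => h.
  have h2 : rsubmx y = 0.
    apply: (kill (a := lsubmx y) xc zc).
    by rewrite h mul0mx.
  rewrite h2 mul0mx addr0 mx11_mul in h.
  have h1 : lsubmx y = 0.
    apply/eqP; rewrite mx11_eq0; move/eqP: h; rewrite scaler_eq0 (negbTE x0) orbF.
    done.
  by rewrite h1 h2 row_mx0.
have [v' [v0 Lv vM]] := hbl (col_mx x z) rf.
have [[u1 u2] /= ev'] : exists u : 'M[K]_1 * 'M[K]_1, v' = u.1 *m x + u.2 *m z.
  by apply/sub_addsmxP; rewrite addsmxE.
have u20 : u2 = 0.
  by apply: (kill (a := u1) xc zc); rewrite -ev'; apply: LW.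
rewrite u20 mul0mx addr0 mx11_mul in ev'.
have u10 : u1 0 0 != 0.
  by apply: contra v0 => /eqP h; rewrite ev' h scale0r.
case: Lv => w wW [w0 /andP [wv vw]]; exists w => //; split => //.
apply/andP; split.
  by apply: submx_trans wv _; rewrite ev' scalemx_sub.
apply: submx_trans vw.
have -> : x = (u1 0 0)^-1 *: v' by rewrite ev' scalerA mulVf // scale1r.
by rewrite scalemx_sub.
Qed.

End Geom.

Section M3.
Variable K : finFieldType.
Local Notation V := 'rV[K]_3.

Definition mx3 (r0 r1 r2 : V) : 'M[K]_3 :=
  \matrix_(i, j) (if val i == 0%N then r0 0 j else if val i == 1%N then r1 0 j else r2 0 j).

Lemma mx3_mul (x y z : K) r0 r1 r2 :
  row3 x y z *m mx3 r0 r1 r2 = x *: r0 + y *: r1 + z *: r2.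
Proof.
apply/rowP => j; rewrite !mxE !big_ord_recl big_ord0 !mxE /=.
by rewrite addr0 addrA.
Qed.

Lemma row3_eq (x y z x' y' z' : K) : x = x' -> y = y' -> z = z' -> row3 x y z = row3 x' y' z'.
Proof. by move=> -> -> ->. Qed.

Lemma row3_comb (a b c : K) r0 r1 r2 (x0 x1 x2 y0 y1 y2 z0 z1 z2 : K) :
  r0 = row3 x0 x1 x2 -> r1 = row3 y0 y1 y2 -> r2 = row3 z0 z1 z2 ->
  a *: r0 + b *: r1 + c *: r2 = row3 (a * x0 + b * y0 + c * z0) (a * x1 + b * y1 + c * z1) (a * x2 + b * y2 + c * z2).
Proof.
move=> -> -> ->; apply/rowP => j; rewrite !mxE.
by case: j => [[|[|[|j]]] hj].
Qed.

Lemma C_unit (t0 lam : K) : lam != 0 ->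
  mx3 (row3 0 0 1) (row3 t0 1 0) (row3 lam 0 0) \in unitmx.
Proof.
move=> l0.
have h : mx3 (row3 0 0 1) (row3 t0 1 0) (row3 lam 0 0) *m
         mx3 (row3 0 0 lam^-1) (row3 0 1 (- t0 / lam)) (row3 1 0 0) = 1%:M.
  apply/matrixP => i j; rewrite !mxE !big_ord_recl big_ord0 !mxE /=.
  case: i => [[|[|[|i]]] hi]; case: j => [[|[|[|j]]] hj] //=; rewrite ?mxE /=;
    try field; by [].
by case: (mulmx1_unit h).
Qed.

End M3.

Unset Implicit Arguments.
Set Strict Implicit.

Theorem proposition2p5 (K : finFieldType) (q s : nat)
  (hq : prime_power q) (hs : (2 <= s)%N) (hK : #|K| = (q ^ s)%N)
  (W : {set 'rV[K]_3})
  (hW : Fq_subspace q W) (hdim : Fq_dim q W = s.+1)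
  (hblock : blocking_set (inL W)) (hnotline : ~ is_line_set (inL W))
  (hpt : exists v : 'rV[K]_3, [/\ v != 0, inL W v & weight q W v = s.-1]) :
  proj_equiv (inL W) (inL (@U_Tr K q s)).
Proof.
have q1 := q_gt1 hq.
have cF := card_Fq hq hK hs.
have hs' : (s.-1 < s)%N by case: (s) hs.
case: hpt => v [v0 _ hwt].
set S := W :&: Kspan v.
have [W0 WD WZ] := hW.
have Sv : forall u, u \in S -> (u <= v)%MS by move=> u; rewrite !inE => /andP [_].
have SW : forall u, u \in S -> u \in W by move=> u; rewrite !inE => /andP [].
have hS : Fq_subspace q S.
  split.
  - by rewrite !inE W0 sub0mx.
  - move=> u u'; rewrite !inE => /andP [uW uv] /andP [u'W u'v].
    by rewrite WD // addmx_sub.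
  - by move=> a u ha; rewrite !inE => /andP [uW uv]; rewrite WZ // scalemx_sub.
have [l0 [l0S eS cS]] := spanq_basis hq hK hs hS.
have sl0 : size l0 = s.-1 by rewrite -(Fq_dim_size hq cS); exact: hwt.
have [lw [_ _ cW]] := spanq_basis hq hK hs hW.
have slw : size lw = s.+1 by rewrite -(Fq_dim_size hq cW).
have l0W : {subset l0 <= W} by move=> x /l0S /SW.
have [l [lW eW cW2]] := extend_aux hq hK hs hW (ltnSn _) l0W.
have sl : size l = 2%N.
  rewrite cW slw eS cS sl0 -expnD in cW2.
  move/(expnI q1): cW2; lia.
clear cW2; case: l lW eW sl => [|a [|b [|? ?]]] // lW eW _.
have aW : a \in W by apply: lW; rewrite mem_head.
have bW : b \in W by apply: lW; rewrite in_cons mem_head orbT.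
have Wdec : forall w, w \in W -> exists a1 b1 sg,
    [/\ a1 \in Fq K q, b1 \in Fq K q, sg \in S & w = a1 *: a + (b1 *: b + sg)].
  move=> w; rewrite -eW => /spanq_consP [a1 [y [h1 hy ->]]].
  case/spanq_consP: hy => b1 [sg [h2 hsg ->]].
  by exists a1, b1, sg; split; rewrite // -eS.
have [j0 vj0] : exists j, v 0 j != 0.
  case: (pickP (fun j => v 0 j != 0)) => [j hj|none]; first by exists j.
  case/eqP: v0; apply/rowP => j; rewrite mxE.
  by move/negbFE: (none j) => /eqP.
pose hof := fun u : 'rV[K]_3 => u 0 j0 / v 0 j0.
have hofE : forall u, (u <= v)%MS -> u = hof u *: v.
  move=> u /submxP [D ->]; rewrite mx11_mul /hof mxE mulfK //.
have hof_lin : forall a1 u u', hof (a1 *: u + u') = a1 * hof u + hof u'.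
  by move=> a1 u u'; rewrite /hof !mxE mulrDl mulrA.
have hof0 : hof 0 = 0 by rewrite /hof mxE mul0r.
pose B := mx3 a b v.
have Ba : a = row3 1 0 0 *m B by rewrite mx3_mul !scale1r !scale0r !addr0.
have Bb : b = row3 0 1 0 *m B by rewrite mx3_mul !scale1r !scale0r !addr0 add0r.
have Bv : v = row3 0 0 1 *m B by rewrite mx3_mul !scale1r !scale0r !add0r.
case: (boolP (B \in unitmx)) => uB; last first.
  exfalso; apply: hnotline.
  have dB : \det B^T == 0 by rewrite det_tr; rewrite unitmxE unitfE negbK in uB.
  case/det0P: dB => y y0 yB.
  pose c := y^T.
  have c0 : c != 0 by rewrite trmx_eq0.
  have Bc : B *m c = 0 by rewrite /c -(trmxK B) -trmx_mul yB trmx0.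
  have ac : a *m c = 0 by rewrite Ba -mulmxA Bc mulmx0.
  have bc : b *m c = 0 by rewrite Bb -mulmxA Bc mulmx0.
  have vc : v *m c = 0 by rewrite Bv -mulmxA Bc mulmx0.
  apply: (degenerate c0) => //.
  move=> w /Wdec [a1 [b1 [sg [_ _ hsg ->]]]].
  rewrite (hofE sg (Sv _ hsg)) !mulmxDl -!scalemxAl ac bc vc !scaler0 !addr0.
  done.
pose f := fun lam : K => [ffun i : 'I_(size l0) => Tr q s (lam * hof l0`_i)].
have [l1 [l2 [ne12 e12]]] : exists l1 l2, l1 != l2 /\ f l1 = f l2.
  case: (boolP [exists l1, exists l2, (l1 != l2) && (f l1 == f l2)]).
    by case/existsP => l1 /existsP [l2 /andP [ne /eqP e]]; exists l1, l2.
  move=> hn; exfalso.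
  have inj : injective f.
    move=> x1 x2 e; apply/eqP; apply/negPn/negP => ne; move/negP: hn; apply.
    by apply/existsP; exists x1; apply/existsP; exists x2; rewrite ne e eqxx.
  have sub : f @: [set: K] \subset ffun_on (Fq K q).
    apply/subsetP => g /imsetP [x _ ->]; apply/ffun_onP => i; rewrite ffunE.
    exact: Tr_Fq hq hK _.
  have := subset_leq_card sub; rewrite card_imset // cardsT card_ffun_on cF card_ord sl0 hK.
  by rewrite leqNgt ltn_exp2l // hs'.
pose lam := l1 - l2.
have lam0 : lam != 0 by rewrite subr_eq0.
have Tl0 : forall i : 'I_(size l0), Tr q s (lam * hof l0`_i) = 0.
  move=> i; have := congr1 (fun g : {ffun 'I_(size l0) -> K} => g i) e12; rewrite /= !ffunE => e.
  by rewrite /lam mulrBl (TrB hq hK) e subrr.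
have TS : forall u, u \in S -> Tr q s (lam * hof u) = 0.
  move=> u; rewrite -eS; apply: (@spanq_ind K q (fun u => Tr q s (lam * hof u) = 0)).
  - by rewrite hof0 mulr0 (Tr0 hq hK).
  - move=> u1 u2 h1 h2; have := hof_lin 1 u1 u2; rewrite scale1r mul1r => ->.
    by rewrite mulrDr (TrD hq hK) h1 h2 addr0.
  - move=> a1 u1 ha h1; rewrite -[a1 *: u1]addr0 hof_lin hof0 addr0 mulrCA TrZ // h1.
    by rewrite mulr0.
  - move=> x xl; have hi : (index x l0 < size l0)%N by rewrite index_mem.
    by have := Tl0 (Ordinal hi); rewrite /= nth_index.
pose T := [set x : K | Tr q s x == 0].
pose Im := [set lam * hof u | u in S].
have ImT : Im \subset T by apply/subsetP => x /imsetP [u uS ->]; rewrite inE TS.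
have cIm : #|Im| = #|S|.
  apply: card_in_imset => u1 u2 h1 h2 /= e.
  by rewrite (hofE _ (Sv _ h1)) (hofE _ (Sv _ h2)) (mulfI lam0 e).
have eIm : Im =i T.
  have cc : #|Im| = #|T|.
    apply/eqP; rewrite eqn_leq subset_leq_card //= cIm cS sl0.
    exact: card_Tr_fiber hq hs 0.
  exact: (elimT (subset_cardP cc) ImT).
have [x0 Tx0] : exists x : K, Tr q s x != 0.
  case: (pickP (fun x : K => Tr q s x != 0)) => [x hx|none]; first by exists x.
  exfalso; have : [set: K] \subset T.
    by apply/subsetP => x _; rewrite inE; move/negbFE: (none x).
  move/subset_leq_card; rewrite cardsT hK => h.
  have := leq_trans h (card_Tr_fiber hq hs 0).
  by rewrite leqNgt ltn_exp2l // hs'.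
pose t0 := (Tr q s x0)^-1 * x0.
have Tt0 : Tr q s t0 = 1 by rewrite /t0 TrZ ?FqV ?(Tr_Fq hq hK) // mulVf.
pose C := mx3 (row3 0 0 1) (row3 t0 1 0) (row3 lam 0 0).
have uC := C_unit t0 lam0.
have comp : forall a1 b1 sg, sg \in S ->
    (a1 *: a + (b1 *: b + sg)) *m (invmx B *m C) = row3 (b1 * t0 + hof sg * lam) b1 a1.
  move=> a1 b1 sg hsg.
  have -> : a1 *: a + (b1 *: b + sg) = row3 a1 b1 (hof sg) *m B.
    by rewrite mx3_mul -(hofE sg (Sv _ hsg)) addrA.
  rewrite mulmxA mulmxK // mx3_mul (row3_comb _ _ _ (erefl _) (erefl _) (erefl _)).
  by apply: row3_eq; ring.
apply: (@transport _ _ _ (invmx B *m C)).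
- by rewrite unitmx_mul unitmx_inv uB uC.
- move=> w /Wdec [a1 [b1 [sg [h1 h2 hsg ->]]]]; rewrite comp //.
  rewrite inE; apply/existsP; exists (b1 * t0 + hof sg * lam); apply/existsP; exists a1.
  rewrite h1 /=; apply/eqP; apply: row3_eq => //.
  by rewrite (TrD hq hK) TrZ // Tt0 mulr1 mulrC TS // addr0.
- move=> u; rewrite inE => /existsP [x /existsP [y /andP [hy /eqP ->]]].
  pose b1 := Tr q s x.
  have hb1 : b1 \in Fq K q by exact: Tr_Fq hq hK _.
  have : x - b1 * t0 \in Im.
    by rewrite eIm inE (TrB hq hK) TrZ // Tt0 mulr1 subrr.
  case/imsetP => sg hsg e.
  exists (y *: a + (b1 *: b + sg)).
    exact: (WD _ _ (WZ _ _ hy aW) (WD _ _ (WZ _ _ hb1 bW) (SW _ hsg))).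
  rewrite (comp _ _ _ hsg); apply: row3_eq => //.
  by rewrite [hof sg * lam]mulrC -e addrC subrK.
Qed.
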